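(* Let $G=(V,E)$ be a finite simple undirected graph of bounded growth with maximum degree $\Delta$ and neighborhood independence bounded by a constant $c$, and let $R$ be an integer with $1\le R<\Delta$. Run the procedure Extended-VM on $G$ with parameter $R$. Then each vertex $v\in V$ can select at least $\deg(v)-O(\Delta c/R)$ neighbors that are not active when $v$ is active, i.e. $v$ has at least $\deg(v)-O(\Delta c/R)$ neighbors outside its own super-class.
   Context: The neighborhood independence of $G$ is the maximum over $v$ of the size of an independent set contained in the neighbor set $\Gamma(v)$; $\deg(v)=|\Gamma(v)|$. $G$ has bounded growth if for every $r$ the number of pairwise independent vertices within distance $r$ of any vertex is bounded by a function of $r$ alone. Procedure Extended-VM$(G,R)$: compute a proper $(\Delta+1)$-coloring of $G$; partition the colors into $R$ super-classes, each consisting of $O(\Delta/R)$ colors (each vertex belongs to the super-class of its color); then perform $R$ phases in round-robin order, one per super-class $S$; in the phase of $S$, the vertices of $S$ are active, and each active vertex $v$ selects all its neighbors not in $S$, divides its backup data equally among them, and sends the parts to them. *)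

(* Defs.v *)
From mathcomp Require Import all_boot all_order.
Set Implicit Arguments. Unset Strict Implicit. Unset Printing Implicit Defensive.

Section Graph.
Variables (T : finType) (e : rel T).

Definition simple_graph : Prop := symmetric e /\ irreflexive e.

Definition nbhd (v : T) : {set T} := [set u | e v u].
Definition deg (v : T) : nat := #|nbhd v|.
Definition max_deg : nat := \max_(v : T) deg v.

Definition independent (I : {set T}) : Prop :=
  forall x y, x \in I -> y \in I -> ~~ e x y.

Definition nbhd_indep_le (c : nat) : Prop :=
  forall v (I : {set T}), I \subset nbhd v -> independent I -> #|I| <= c.

Fixpoint ball (v : T) (r : nat) : {set T} :=
  match r with
  | 0 => [set v]
  | r'.+1 => ball v r' :|: [set u | [exists w in ball v r', e w u]]
  end.

Definition bounded_growth (f : nat -> nat) : Prop :=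
  forall r v (I : {set T}), I \subset ball v r -> independent I -> #|I| <= f r.

Definition proper_coloring k (col : T -> 'I_k) : Prop :=
  forall u v, e u v -> col u != col v.

End Graph.

(* Main.v *)
Require Import Defs.
From mathcomp Require Import all_boot all_order.

Theorem lemma4 :
  forall K : nat, exists C : nat,
  forall (T : finType) (e : rel T) (f : nat -> nat) (c R : nat)
         (col : T -> 'I_(max_deg e).+1) (sc : 'I_(max_deg e).+1 -> 'I_R),
  simple_graph e ->
  bounded_growth e f ->
  nbhd_indep_le e c ->
  1 <= R -> R < max_deg e ->
  proper_coloring e col ->
  (forall s : 'I_R, R * #|[set k | sc k == s]| <= K * max_deg e) ->
  forall v : T,
    R * deg e v <=
    R * #|[set u in nbhd e v | sc (col u) != sc (col v)]| + C * max_deg e * c.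
Proof.
move=> K; exists K => T e f c R col sc [esym eirr] _ Hind _ _ Hcol Hsc v.
set N := nbhd e v.
set s := sc (col v).
set A := [set u in N | sc (col u) == s].
have HdA : deg e v = #|[set u in N | sc (col u) != s]| + #|A|.
  rewrite /deg -/N addnC.
  rewrite -(cardsID [set u | sc (col u) == s] N).
  congr (_ + _); apply: eq_card => u; rewrite !inE // andbC //.
have HA : #|A| <= c * #|[set k | sc k == s]|.
  rewrite -sum1_card (partition_big col (fun k => sc k == s)) /=; [|by move=> u; rewrite inE => /andP[]].
  rewrite [c * _]mulnC -sum_nat_const.
  rewrite [X in _ <= X](eq_bigl (fun k => sc k == s)); last by move=> k; rewrite inE.
  apply: leq_sum => k Hk.
  rewrite sum1_card.
  have -> : #|[pred u in A | col u == k]| = #|[set u in A | col u == k]|.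
    by apply: eq_card => u; rewrite !inE.
  apply: (Hind v).
    by apply/subsetP => u; rewrite !inE => /andP[/andP[]].
  move=> x y; rewrite !inE => /andP[_ /eqP Hx] /andP[_ /eqP Hy].
  apply/negP => Hxy; move: (Hcol _ _ Hxy); by rewrite Hx Hy eqxx.
rewrite HdA mulnDr leq_add2l.
apply: (leq_trans (leq_mul (leqnn R) HA)).
rewrite (mulnCA R c) (mulnC (K * _) c) leq_mul2l Hsc orbT //.
Qed.
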